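(* Let $x_1,\dots,x_N\in\mathbb{R}^D$ be $N\ge 2$ pairwise distinct points, and let $x_1',\dots,x_N'\in\mathbb{R}^D$ satisfy $\|x_n-x_n'\|\le\varepsilon$ for all $n=1,\dots,N$, where $\|\cdot\|$ is the Euclidean norm and $$\varepsilon\le \tfrac12\min_{n_1\neq n_2}\|x_{n_1}-x_{n_2}\|.$$ Then for every integer $K\ge 1$ and every choice of indices $n_1,\dots,n_K\in\{1,\dots,N\}$, with the cyclic convention $n_{K+1}:=n_1$, $$\sum_{k=1}^{K}\tfrac12\|x_{n_k}-x_{n_k}'\|^2\;\le\;\sum_{k=1}^{K}\tfrac12\|x_{n_k}-x_{n_{k+1}}'\|^2 .$$ That is, the set $\{(x_1,x_1'),\dots,(x_N,x_N')\}$ (equivalently, the map $x_n\mapsto x_n'$) is $c$-cyclically monotone for the quadratic cost $c(x,y)=\tfrac12\|x-y\|^2$.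
   Context: A set of pairs $\{(x_n,y_n)\}_{n=1}^N$ (or the map $x_n\mapsto y_n$) is called $c$-cyclically monotone for a cost function $c$ if for every $K\ge1$ and all indices $n_1,\dots,n_K$ (with $n_{K+1}:=n_1$) one has $\sum_{k=1}^K c(x_{n_k},y_{n_k})\le\sum_{k=1}^K c(x_{n_k},y_{n_{k+1}})$. *)

(* Defs.v *)
From HB Require Import structures.
From mathcomp Require Import all_boot all_order all_algebra.
Set Implicit Arguments. Unset Strict Implicit. Unset Printing Implicit Defensive.
Import Order.TTheory GRing.Theory Num.Theory.
Local Open Scope ring_scope.

Definition eucl_norm (R : rcfType) (D : nat) (v : 'rV[R]_D) : R :=
  Num.sqrt (\sum_(i < D) v ord0 i ^+ 2).

Definition quad_cost (R : rcfType) (D : nat) (x y : 'rV[R]_D) : R :=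
  2^-1 * eucl_norm (x - y) ^+ 2.

(* A cycle of length K >= 1 is given by idx : 'I_K -> 'I_N with the cyclic
   convention that the successor of index k is (k+1) mod K. *)
Definition c_cyclically_monotone (T U : Type) (R : numDomainType) (c : T -> U -> R)
  (N : nat) (x : 'I_N -> T) (y : 'I_N -> U) : Prop :=
  forall (K : nat) (idx : 'I_K.+1 -> 'I_N),
    \sum_(k < K.+1) c (x (idx k)) (y (idx k))
      <= \sum_(k < K.+1) c (x (idx k)) (y (idx (ordS k))).

(* Main.v *)
Require Import Defs.
From HB Require Import structures.
From mathcomp Require Import all_boot all_order all_algebra.
From mathcomp Require Import ring lra.
Import Order.TTheory GRing.Theory Num.Theory.
Local Open Scope ring_scope.

Lemma key_ineq (R : rcfType) (D : nat) (p q : 'I_D -> R) :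
  4 * \sum_(i < D) p i ^+ 2 <= \sum_(i < D) q i ^+ 2 ->
  \sum_(i < D) p i ^+ 2 <= \sum_(i < D) (p i + q i) ^+ 2.
Proof.
move=> H.
have E : \sum_(i < D) (p i + q i) ^+ 2 =
  2^-1 * \sum_(i < D) (2 * p i + q i) ^+ 2 + 2^-1 * \sum_(i < D) q i ^+ 2
  - \sum_(i < D) p i ^+ 2.
  rewrite !mulr_sumr -!big_split -sumrB /=; apply: eq_bigr => i _.
  field; lra.
have P : 0 <= \sum_(i < D) (2 * p i + q i) ^+ 2 by apply: sumr_ge0 => j _; apply: sqr_ge0.
rewrite E; lra.
Qed.

Lemma sqr_norm (R : rcfType) (D : nat) (v : 'rV[R]_D) :
  eucl_norm v ^+ 2 = \sum_(i < D) v ord0 i ^+ 2.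
Proof. by rewrite /eucl_norm sqr_sqrtr // sumr_ge0 // => i _; apply: sqr_ge0. Qed.

Lemma cyc_shift (R : rcfType) (K N : nat) (f : 'I_N -> 'I_N -> R) (idx : 'I_K.+1 -> 'I_N) :
  \sum_(k < K.+1) f (idx k) (idx (ordS k)) = \sum_(k < K.+1) f (idx (ord_pred k)) (idx k).
Proof.
rewrite [RHS](reindex_inj (@ordS_inj K.+1)).
by apply: eq_bigr => k _; rewrite ordSK.
Qed.

Theorem mainTheorem1 (R : rcfType) (D N : nat) (x x' : 'I_N -> 'rV[R]_D)
  (eps : R) :
  (2 <= N)%N ->
  injective x ->
  (forall n, eucl_norm (x n - x' n) <= eps) ->
  (forall n1 n2 : 'I_N, n1 != n2 -> eps <= 2^-1 * eucl_norm (x n1 - x n2)) ->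
  c_cyclically_monotone (@quad_cost R D) x x'.
Proof.
move=> _ _ Hn Hd.
have key : forall m n, quad_cost (x n) (x' n) <= quad_cost (x m) (x' n).
  move=> m n; rewrite /quad_cost ler_pM2l ?invr_gt0 ?ltr0n //.
  have [->|mn] := eqVneq m n; first by [].
  rewrite !sqr_norm.
  have -> : \sum_(i < D) (x m - x' n) ord0 i ^+ 2 =
     \sum_(i < D) ((x n - x' n) ord0 i + (x m - x n) ord0 i) ^+ 2.
    by apply: eq_bigr => i _; rewrite !mxE; congr (_ ^+ 2); ring.
  apply: key_ineq.
  rewrite -!sqr_norm.
  have h1 := Hn n; have h2 := Hd _ _ mn.
  have a0 : 0 <= eucl_norm (x n - x' n) by apply: sqrtr_ge0.
  have b0 : 0 <= eucl_norm (x m - x n) by apply: sqrtr_ge0.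
  have : 2 * eucl_norm (x n - x' n) <= eucl_norm (x m - x n) by lra.
  rewrite -ler_sqr ?nnegrE ?mulr_ge0 //.
  by rewrite exprMn; lra.
move=> K idx.
have E := @cyc_shift R K N (fun a b => quad_cost (x a) (x' b)) idx.
rewrite E.
by apply: ler_sum => k _; apply: key.
Qed.
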